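(* Let $r\ge 1$ be an integer, $\tau_0>0$, and let $k_a$ satisfy $rk_a\in(0,1)$. Let $$h_w> \frac{4\tau_0}{(1+r)(1+rk_a)}.$$ Then there exist $k_v>0$, $k_p>0$ such that for every $\tau\in[0,\tau_0]$, the polynomial $\tau s^3+s^2+\big(rk_v+\tfrac{r(r+1)}{2}k_ph_w\big)s+rk_p$ is Hurwitz and $$r\,\sup_{\omega\in\mathbb{R}}|H_0(j\omega;\tau)|\le 1,\qquad H_0(s;\tau)=\frac{k_as^2+k_vs+k_p}{\tau s^3+s^2+\big(rk_v+\tfrac{r(r+1)}{2}k_ph_w\big)s+rk_p}.$$ Consequently, for every $\tau\in[0,\tau_0]$ and every $\omega\in\mathbb{R}$, all roots $z$ of $P(z;\omega)=z^r-H_0(j\omega;\tau)\sum_{l=1}^r z^{r-l}$ satisfy $|z|\le 1$ (i.e. the platoon is robustly string stable).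
   Context: Platoon of identical vehicles with dynamics $\ddot x_i=a_i$, $\tau\dot a_i+a_i=u_i$, parasitic lag $\tau\in[0,\tau_0]$, each vehicle using position, velocity and acceleration of its $r$ immediate predecessors via the control law $u_i=\sum_{l=1}^r\big[k_a a_{i-l}-k_v(v_i-v_{i-l})-k_p(x_i-x_{i-l}+d_l+l h_w v_i)\big]$ (identical gains for all $l$), where $d_l$ is the standstill distance to the $l$-th predecessor. With spacing errors $e_i=x_i-x_{i-1}+d+h_wv_i$, the errors propagate as $E_i(s)=H_0(s)\sum_{l=1}^rE_{i-l}(s)$. Robust string stability means the spectral radius of the characteristic polynomial $P(z;\omega)$ is at most $1$ for all $\omega$ and all $\tau\in[0,\tau_0]$. *)

(* Defs.v *)
(* Complex numbers = an arbitrary numClosedFieldType C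
   (e.g. algC); "real" quantities are elements x of C with x \is Num.real. *)
From HB Require Import structures.
From mathcomp Require Import all_boot all_order all_algebra.
Set Implicit Arguments. Unset Strict Implicit. Unset Printing Implicit Defensive.
Import Order.TTheory GRing.Theory Num.Theory.
Local Open Scope ring_scope.

Definition hurwitz (C : numClosedFieldType) (p : {poly C}) : Prop :=
  p != 0 /\ forall z : C, root p z -> 'Re z < 0.

Definition charpoly (C : numClosedFieldType) (r : nat) (kv kp hw tau : C)
  : {poly C} :=
  tau *: 'X^3 + 'X^2
  + (r%:R * kv + (r * r.+1)%:R / 2%:R * kp * hw) *: 'X
  + (r%:R * kp)%:P.

Definition numpoly (C : numClosedFieldType) (ka kv kp : C) : {poly C} :=
  ka *: 'X^2 + kv *: 'X + kp%:P.

Definition H0 (C : numClosedFieldType) (r : nat) (ka kv kp hw tau s : C) : C :=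
  (numpoly ka kv kp).[s] / (charpoly r kv kp hw tau).[s].

Definition Ppoly (C : numClosedFieldType) (r : nat) (H : C) : {poly C} :=
  'X^r - H *: \sum_(1 <= l < r.+1) 'X^(r - l).

(* Main.v *)
Require Import Defs.
From HB Require Import structures.
From mathcomp Require Import all_boot all_order all_algebra.
From mathcomp Require Import ring zify.
Import Order.TTheory GRing.Theory Num.Theory.
Local Open Scope ring_scope.

Ltac realt := repeat first [ assumption | rewrite realN | rewrite realV | apply: realB | apply: realD | apply: realM | apply: realX | apply: realn | apply: real0 | apply: real1 ].

Lemma cubic_re (C : numClosedFieldType) (t b c z : C) :
  0 <= t -> 0 < c -> t * c < b ->
  t * z ^+ 3 + z ^+ 2 + b * z + c = 0 -> 'Re z < 0.
Proof.
move=> t0 c0 tcb hz.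
have tr : t \is Num.real by exact: ger0_real.
have b0 : 0 < b by apply: le_lt_trans tcb; apply: mulr_ge0 => //; exact: ltW.
have br : b \is Num.real by exact: gtr0_real.
have cr : c \is Num.real by exact: gtr0_real.
set x := 'Re z; set y := 'Im z.
have xr : x \is Num.real by exact: Creal_Re.
have yr : y \is Num.real by exact: Creal_Im.
set E1 := t * (x ^+ 3 - 3%:R * x * y ^+ 2) + x ^+ 2 - y ^+ 2 + b * x + c.
set E2 := t * (3%:R * x ^+ 2 - y ^+ 2) + 2%:R * x + b.
have E1r : E1 \is Num.real by rewrite /E1; realt.
have Yr : y * E2 \is Num.real by rewrite /E2; realt.
have ez : E1 + 'i * (y * E2) = 0.
  have -> : E1 + 'i * (y * E2) = t * z ^+ 3 + z ^+ 2 + b * z + c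
     - ('i ^+ 2 + 1) * (3%:R * t * x * y ^+ 2 + t * y ^+ 3 * 'i + y ^+ 2).
    rewrite [in RHS](Crect z) /E1 /E2 -/x -/y; ring.
  by rewrite hz sqrCi addNr mul0r subr0.
have e1 : E1 = 0 by rewrite -(Re_rect E1r Yr) ez; apply/Creal_ReP; exact: real0.
have e2 : y * E2 = 0 by rewrite -(Im_rect E1r Yr) ez; apply/Creal_ImP; exact: real0.
rewrite real_ltNge ?real0 //; apply/negP => x0.
have key : t * E1 - (3%:R * t * x + 1) * E2 =
   (t * c - b) - (8%:R * t ^+ 2 * x ^+ 3 + 8%:R * t * x ^+ 2 + 2%:R * b * t * x + 2%:R * x).
  by rewrite /E1 /E2; ring.
have pos : 0 <= 8%:R * t ^+ 2 * x ^+ 3 + 8%:R * t * x ^+ 2 + 2%:R * b * t * x + 2%:R * x.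
  by rewrite !addr_ge0 // !mulr_ge0 // ?exprn_ge0 // ltW.
move: e2 => /eqP; rewrite mulf_eq0 => /orP [/eqP y0 | /eqP e2].
  move: e1; rewrite /E1 y0 expr0n /= !mulr0 !subr0 => e1.
  have : 0 < t * x ^+ 3 + x ^+ 2 + b * x + c.
    by rewrite ltr_wpDl // !addr_ge0 // ?mulr_ge0 ?exprn_ge0 // ltW.
  by rewrite e1 ltxx.
move: key; rewrite e1 e2 !mulr0 subr0 => /eqP; rewrite eq_sym subr_eq add0r => /eqP tcb'.
by move: tcb; rewrite -subr_lt0 tcb' => /(le_lt_trans pos); rewrite ltxx.
Qed.

Lemma mag (C : numClosedFieldType) (R ka kv kp b t w : C) :
  R \is Num.real -> ka \is Num.real -> kv \is Num.real -> kp \is Num.real ->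
  b \is Num.real -> t \is Num.real -> w \is Num.real ->
  0 <= R ->
  0 <= b ^+ 2 - 2%:R * (R * kp) * (1 - R * ka) - R ^+ 2 * kv ^+ 2 ->
  0 <= 1 - (R * ka) ^+ 2 - 2%:R * b * t ->
  R * `| (ka * (w * 'i) ^+ 2 + kv * (w * 'i) + kp) /
         (t * (w * 'i) ^+ 3 + (w * 'i) ^+ 2 + b * (w * 'i) + R * kp) | <= 1.
Proof.
move=> Rr kar kvr kpr br tr wr R0 A0 B0.
have -> : ka * (w * 'i) ^+ 2 + kv * (w * 'i) + kp =
    (kp - ka * w ^+ 2) + 'i * (kv * w).
  apply/eqP; rewrite -subr_eq0; apply/eqP.
  have -> : ka * (w * 'i) ^+ 2 + kv * (w * 'i) + kp - (kp - ka * w ^+ 2 + 'i * (kv * w))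
     = ('i ^+ 2 + 1) * (ka * w ^+ 2) by ring.
  by rewrite sqrCi addNr mul0r.
have -> : t * (w * 'i) ^+ 3 + (w * 'i) ^+ 2 + b * (w * 'i) + R * kp =
    (R * kp - w ^+ 2) + 'i * (b * w - t * w ^+ 3).
  apply/eqP; rewrite -subr_eq0; apply/eqP.
  have -> : t * (w * 'i) ^+ 3 + (w * 'i) ^+ 2 + b * (w * 'i) + R * kp -
    ((R * kp - w ^+ 2) + 'i * (b * w - t * w ^+ 3))
     = ('i ^+ 2 + 1) * (t * w ^+ 3 * 'i + w ^+ 2) by ring.
  by rewrite sqrCi addNr mul0r.
set u1 := kp - ka * w ^+ 2; set v1 := kv * w.
set u2 := R * kp - w ^+ 2; set v2 := b * w - t * w ^+ 3.
have u1r : u1 \is Num.real by rewrite /u1; realt.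
have v1r : v1 \is Num.real by rewrite /v1; realt.
have u2r : u2 \is Num.real by rewrite /u2; realt.
have v2r : v2 \is Num.real by rewrite /v2; realt.
set D := u2 + 'i * v2.
have [->|Dn0] := eqVneq D 0.
  by rewrite invr0 mulr0 normr0 mulr0 ler01.
have Dp : 0 < `|D| by rewrite normr_gt0.
rewrite normf_div mulrA ler_pdivrMr // mul1r.
rewrite -(ler_pXn2r (n:=2)) // ?nnegrE ?mulr_ge0 ?normr_ge0 //.
rewrite exprMn !normC2_rect // -subr_ge0.
have -> : u2 ^+ 2 + v2 ^+ 2 - R ^+ 2 * (u1 ^+ 2 + v1 ^+ 2) =
  w ^+ 2 * ((b ^+ 2 - 2%:R * (R * kp) * (1 - R * ka) - R ^+ 2 * kv ^+ 2)
     + (1 - (R * ka) ^+ 2 - 2%:R * b * t) * w ^+ 2 + t ^+ 2 * (w ^+ 2) ^+ 2).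
  by rewrite /u1 /v1 /u2 /v2; ring.
have w2 : 0 <= w ^+ 2 by rewrite -realEsqr.
have t2 : 0 <= t ^+ 2 by rewrite -realEsqr.
apply: mulr_ge0 => //; apply: addr_ge0; [apply: addr_ge0 => //; exact: mulr_ge0 | apply: mulr_ge0 => //; exact: exprn_ge0].
Qed.

Lemma proot (C : numClosedFieldType) (r : nat) (H z : C) :
  (1 <= r)%N -> r%:R * `|H| <= 1 -> root (Ppoly r H) z -> `|z| <= 1.
Proof.
case: r => [//|r] _ rH.
rewrite rootE /Ppoly !hornerE horner_sum subr_eq0 => /eqP hz.
rewrite real_leNgt ?normr_real ?real1 //; apply/negP => z1.
have z1' : 1 <= `|z| by exact: ltW.
have zp : 0 < `|z| ^+ r by rewrite exprn_gt0 // (lt_trans ltr01).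
have h1 : `|z| ^+ r.+1 <= `|z| ^+ r.
  rewrite -normrX hz normrM.
  apply: (@le_trans _ _ (`|H| * (`|z| ^+ r *+ r.+1))).
    apply: ler_wpM2l => //.
    have -> : `|z| ^+ r *+ r.+1 = \sum_(1 <= i < r.+2) `|z| ^+ r by rewrite sumr_const_nat subn1.
    apply: (le_trans (ler_norm_sum _ _ _)).
    rewrite big_nat_cond [X in _ <= X]big_nat_cond.
    apply: ler_sum => l /andP [/andP [l1 _] _]; rewrite hornerXn normrX.
    apply: ler_weXn2l => //.
    lia.
  by rewrite mulrnAr -mulr_natl mulrA ler_piMl // ltW.
by move: h1; rewrite exprS ger_pMl // => h; move: (lt_le_trans z1 h); rewrite ltxx.
Qed.

Theorem theorem2 (C : numClosedFieldType) (r : nat) (tau0 ka hw : C) :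
  (1 <= r)%N -> 0 < tau0 ->
  0 < r%:R * ka -> r%:R * ka < 1 ->
  hw \is Num.real ->
  4%:R * tau0 / ((1 + r%:R) * (1 + r%:R * ka)) < hw ->
  exists kv kp : C, 0 < kv /\ 0 < kp /\
    forall tau : C, 0 <= tau -> tau <= tau0 ->
      hurwitz (charpoly r kv kp hw tau) /\
      (forall w : C, w \is Num.real ->
         r%:R * `|H0 r ka kv kp hw tau (w * 'i)| <= 1) /\
      (forall w : C, w \is Num.real -> forall z : C,
         root (Ppoly r (H0 r ka kv kp hw tau (w * 'i))) z -> `|z| <= 1).
Proof.
move=> r1 t0 a0 a1 hwr hyp.
have R0 : 0 < r%:R :> C by rewrite ltr0n.
have ka0 : 0 < ka by rewrite -(pmulr_rgt0 _ R0).
have a1' : 0 < 1 - r%:R * ka by rewrite subr_gt0.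
have a1'' : 0 < 1 + r%:R * ka by rewrite addr_gt0.
have R1 : 0 < 1 + r%:R :> C by rewrite addr_gt0.
have X0 : 0 < (1 + r%:R) * (1 + r%:R * ka) by rewrite mulr_gt0.
have hw0 : 0 < hw.
  by apply: lt_trans hyp; rewrite divr_gt0 // mulr_gt0 // ltr0n.
have E0 : 0 < hw * ((1 + r%:R) * (1 + r%:R * ka)) - 4%:R * tau0.
  by rewrite subr_gt0 -ltr_pdivrMr.
have F0 : 0 < (1 + r%:R) * hw by rewrite mulr_gt0.
set E := hw * ((1 + r%:R) * (1 + r%:R * ka)) - 4%:R * tau0.
set F := (1 + r%:R) * hw.
exists (2%:R * (1 - r%:R * ka) / (r%:R * F)),
       ((1 - r%:R * ka) * E / (tau0 * r%:R * F ^+ 2)).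
split; first by rewrite divr_gt0 ?mulr_gt0 ?ltr0n.
split; first by rewrite divr_gt0 ?mulr_gt0 ?exprn_gt0.
move=> tau tau0' taule.
set kv := 2%:R * (1 - r%:R * ka) / (r%:R * F).
set kp := (1 - r%:R * ka) * E / (tau0 * r%:R * F ^+ 2).
set bv := (1 - (r%:R * ka) ^+ 2) / (2%:R * tau0).
have Rn0 : r%:R != 0 :> C by rewrite gt_eqF.
have Fn0 : F != 0 by rewrite gt_eqF.
have tn0 : tau0 != 0 by rewrite gt_eqF.
have bE : r%:R * kv + (r * r.+1)%:R / 2%:R * kp * hw = bv.
  rewrite natrM -natr1 /kv /kp /bv /E /F.
  by field; rewrite !gt_eqF.
have kar : ka \is Num.real by exact: gtr0_real.
have t0r : tau0 \is Num.real by exact: gtr0_real.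
have tr : tau \is Num.real by exact: ger0_real.
have Rr : (r%:R : C) \is Num.real by exact: realn.
have kvr : kv \is Num.real by rewrite /kv /F; realt.
have kpr : kp \is Num.real by rewrite /kp /E /F; realt.
have bvr : bv \is Num.real by rewrite /bv; realt.
have kp0 : 0 < kp by rewrite divr_gt0 ?mulr_gt0 ?exprn_gt0.
have c0 : 0 < r%:R * kp by rewrite mulr_gt0.
have A0 : 0 <= bv ^+ 2 - 2%:R * (r%:R * kp) * (1 - r%:R * ka) - r%:R ^+ 2 * kv ^+ 2.
  have -> : bv ^+ 2 - 2%:R * (r%:R * kp) * (1 - r%:R * ka) - r%:R ^+ 2 * kv ^+ 2
     = ((1 - r%:R * ka) * E / (2%:R * tau0 * F)) ^+ 2.
    by rewrite /bv /kp /kv /E /F; field; rewrite !gt_eqF.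
  by rewrite -realEsqr /E /F; realt.
have B0 : 0 <= 1 - (r%:R * ka) ^+ 2 - 2%:R * bv * tau.
  have -> : 1 - (r%:R * ka) ^+ 2 - 2%:R * bv * tau
     = (1 - r%:R * ka) * (1 + r%:R * ka) * (tau0 - tau) / tau0.
    by rewrite /bv; field; rewrite !gt_eqF.
  by rewrite divr_ge0 ?mulr_ge0 ?subr_ge0 // ltW.
have tcb : tau * (r%:R * kp) < bv.
  rewrite -subr_gt0.
  have -> : bv - tau * (r%:R * kp) =
     (1 - r%:R * ka) * ((1 + r%:R * ka) * (F - tau0) ^+ 2
        + (6%:R + (1 - r%:R * ka)) * tau0 ^+ 2) / (2%:R * tau0 * F ^+ 2)
     + (tau0 - tau) * (r%:R * kp).
    by rewrite /bv /kp /E /F; field; rewrite !gt_eqF.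
  apply: ltr_wpDr; first by rewrite mulr_ge0 ?subr_ge0 // ltW.
  rewrite divr_gt0 ?mulr_gt0 ?exprn_gt0 //.
  apply: ltr_wpDl.
    apply: mulr_ge0; [exact: ltW | rewrite -realEsqr /F; realt].
  by rewrite mulr_gt0 ?exprn_gt0 // addr_gt0 // ltr0n.
have pE : charpoly r kv kp hw tau =
    tau *: 'X^3 + 'X^2 + bv *: 'X + (r%:R * kp)%:P by rewrite /charpoly bE.
have magb : forall w : C, w \is Num.real ->
    r%:R * `|H0 r ka kv kp hw tau (w * 'i)| <= 1.
  move=> w wr; rewrite /H0 pE /numpoly !hornerE.
  have := @mag _ _ _ _ _ _ _ _ Rr kar kvr kpr bvr tr wr (ltW R0) A0 B0.
  by rewrite !mulrA.
split; last split => //.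
  split.
    apply/negP => /eqP p0.
    have := congr1 (fun p => p.[0]) p0; rewrite /= pE !(hornerD, hornerZ, hornerXn, hornerX, hornerC).
    move=> h; have h0 : r%:R * kp = 0 by rewrite -h; ring.
    by move: c0; rewrite h0 ltxx.
  move=> z; rewrite pE rootE !(hornerD, hornerZ, hornerXn, hornerX, hornerC) => /eqP hz.
  apply: (@cubic_re _ _ _ _ _ tau0' c0 tcb); rewrite -hz.
  by rewrite !mulrA.
move=> w wr z; apply: proot => //; exact: magb.
Qed.
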